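(* Let $p$ be a CFM process. Then $p$ does not satisfy DNI if and only if there exists a sequential process $p_i \in \mathrm{dec}(p)$ such that $p_i$ does not satisfy DNI.
   Context: Fix a finite set of actions $Act = H \cup L \cup \{\tau\}$, where $H$ (high-level actions) and $L$ (low-level actions) are disjoint and $\tau$ is the silent action; $\mu$ ranges over $Act$, $h$ over $H$. Fix a finite set of process constants $A,B,C,\dots$ disjoint from $Act$. CFM terms are given by three syntactic categories: guarded processes $s ::= \mathbf{0} \mid \mu.q \mid s+s$; sequential processes $q ::= s \mid C$; parallel processes $p ::= q \mid p \,|\, p$. A CFM process is a term all of whose constants have a defining equation $C \doteq s$ with $s$ guarded. The LTS semantics is given by the rules: $\mu.p \xrightarrow{\mu} p$; if $p \xrightarrow{\mu} p'$ and $C \doteq p$ then $C \xrightarrow{\mu} p'$; if $p \xrightarrow{\mu} p'$ then $p+q \xrightarrow{\mu} p'$ and $q+p \xrightarrow{\mu} p'$; if $p \xrightarrow{\mu} p'$ then $p\,|\,q \xrightarrow{\mu} p'\,|\,q$ and $q\,|\,p \xrightarrow{\mu} q\,|\,p'$. A process $p'$ is reachable from $p$ if $p \to^* p'$ in this LTS. A finite-state machine (FSM) is $N=(S,A,T)$ with $S$ a finite set of places, $A$ a finite set of labels containing $\tau$, and $T \subseteq S \times A \times (S \cup \{\theta\})$, where $\theta$ is the empty multiset. Markings are finite multisets over $S$ ($\oplus$ is multiset union, $\ominus$ multiset difference). A transition $t=(s,\ell,m)$ has pre-set $s$, label $\ell$, post-set $m$; it is enabled at marking $m_1$ if $s \in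 m_1$, and firing gives $m_1 \xrightarrow{\ell} (m_1 \ominus s)\oplus m$. Net semantics of CFM: places are the sequential CFM processes other than $\mathbf{0}$. The decomposition function is $\mathrm{dec}(\mathbf{0})=\theta$, $\mathrm{dec}(\mu.p)=\{\mu.p\}$, $\mathrm{dec}(p+p')=\{p+p'\}$, $\mathrm{dec}(C)=\{C\}$, $\mathrm{dec}(p\,|\,p')=\mathrm{dec}(p)\oplus\mathrm{dec}(p')$. The net $[\![p]\!]$ of a CFM process $p$ is an FSM with initial marking $\mathrm{dec}(p)$, all of whose places and transitions are reachable from $\mathrm{dec}(p)$; its transitions are the triples $(s,\mu,\mathrm{dec}(s'))$ for reachable places $s$ with $s \xrightarrow{\mu} s'$ in the LTS (here $s'$ is sequential, so $\mathrm{dec}(s')$ is $\theta$ or a single place). The net $[\![p\setminus H]\!]$ is obtained from $[\![p]\!]=(S,A,T,\mathrm{dec}(p))$ by renaming each place $s$ as $s\setminus H$, deleting all transitions with label in $H$ (keeping the others with places renamed), taking labels $A\setminus H$, and initial marking $\mathrm{dec}(p)\setminus H$ (renaming applied elementwise); for a marking $m$ of $[\![p]\!]$, $m\setminus H$ is the elementwise renamed marking. Branching bisimilarity on places: in an FSM, $s \Rightarrow^{\epsilon} m$ is the least relation with $s \Rightarrow^\epsilon s$, and if $s \Rightarrow^\epsilon s'$ and $s' \xrightarrow{\tau} m$ then $s \Rightarrow^\epsilon m$ ($m$ a place or $\theta$). A relation $R \subseteq S\times S$ is a branching bisimulation if whenever $(s_1,s_2)\in R$, for every $\ell$ and every $s_1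 \xrightarrow{\ell} m_1$: either $\ell=\tau$ and there is $m_2$ with $s_2 \Rightarrow^\epsilon m_2$, $(s_1,m_2)\in R$ and $(m_1,m_2)\in R$; or there are $s, m_2$ with $s_2 \Rightarrow^\epsilon s \xrightarrow{\ell} m_2$, $(s_1,s)\in R$ and either $m_1=\theta=m_2$ or $(m_1,m_2)\in R$; and symmetrically for moves of $s_2$. Branching bisimilarity $\approx$ is the union of all branching bisimulations. The additive closure $R^\oplus$ of a place relation $R$ is the least relation on markings with $(\theta,\theta)\in R^\oplus$ and, if $(s_1,s_2)\in R$ and $(m_1,m_2)\in R^\oplus$, then $(s_1\oplus m_1, s_2\oplus m_2)\in R^\oplus$. Branching team equivalence is $\approx^\oplus$. For CFM processes, $p \approx^\oplus q$ means $\mathrm{dec}(p)\approx^\oplus \mathrm{dec}(q)$ in the union of the nets of $p$ and $q$; in particular $p'\setminus H \approx^\oplus p''\setminus H$ means that the markings $\mathrm{dec}(p')\setminus H$ and $\mathrm{dec}(p'')\setminus H$ are related by $\approx^\oplus$ (computed in the union of the nets $[\![p'\setminus H]\!]$ and $[\![p''\setminus H]\!]$). DNI (Distributed Non-Interference): a CFM process $p$ satisfies DNI if for all $p',p''$ reachable from $p$ and every $h\in H$ with $p' \xrightarrow{h} p''$, we have $p'\setminus H \approx^\oplus p''\setminus H$. Equivalently, for all markings $m_1,m_2$ reachable from $\mathrm{dec}(p)$ in $[\![p]\!]$ and every $h\in H$ with $m_1 \xrightarrow{h} m_2$, the markings $m_1\setminus H$ and $m_2\setminus H$ of $[\![p\setminus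 H]\!]$ are related by $\approx^\oplus$. *)

(* Defs.v *)
From Stdlib Require Import List Permutation Relations FinFun.
Import ListNotations.
Set Implicit Arguments.
Unset Strict Implicit.

Section CFM.
Variables (H L K : Type).

Inductive action : Type := Tau | Hi (h : H) | Lo (l : L).

Definition is_high (a : action) : Prop := exists h, a = Hi h.

(* raw terms; the three syntactic categories are carved out by predicates *)
Inductive proc : Type :=
| Nil : proc
| Pref : action -> proc -> proc
| Sum : proc -> proc -> proc
| Const : K -> proc
| Par : proc -> proc -> proc.

(* s ::= 0 | mu.q | s+s   with   q ::= s | C *)
Fixpoint guarded (p : proc) : Prop :=
  match p with
  | Nil => True
  | Pref _ q => match q with Const _ => True | _ => guarded q end
  | Sum a b => guarded a /\ guarded b
  | _ => False
  end.

Definition sequential (p : proc) : Prop := guarded p \/ exists C, p = Const C.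

Fixpoint parallel (p : proc) : Prop :=
  match p with
  | Par a b => parallel a /\ parallel b
  | _ => sequential p
  end.

(* def C is the body of the defining equation C =. def C *)
Variable def : K -> proc.

Definition CFM_process (p : proc) : Prop :=
  parallel p /\ forall C, guarded (def C).

Inductive step : proc -> action -> proc -> Prop :=
| st_pref mu p : step (Pref mu p) mu p
| st_const C mu p' : step (def C) mu p' -> step (Const C) mu p'
| st_suml p q mu p' : step p mu p' -> step (Sum p q) mu p'
| st_sumr p q mu p' : step p mu p' -> step (Sum q p) mu p'
| st_parl p q mu p' : step p mu p' -> step (Par p q) mu (Par p' q)
| st_parr p q mu p' : step p mu p' -> step (Par q p) mu (Par q p').

Definition reachable (p p' : proc) : Prop :=
  clos_refl_trans proc (fun a b => exists mu, step a mu b) p p'.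

(* markings: finite multisets of places, represented by lists up to permutation *)
Definition marking := list proc.

Fixpoint dec (p : proc) : marking :=
  match p with
  | Nil => []
  | Par a b => dec a ++ dec b
  | _ => [p]
  end.

Definition olist (o : option proc) : marking :=
  match o with None => [] | Some s => [s] end.

(* an FSM: a set of places and transitions (s, l, m) with m a place (Some) or theta (None) *)
Record FSM := { places : proc -> Prop; trans : proc -> action -> option proc -> Prop }.

Definition fire (T : proc -> action -> option proc -> Prop) (m1 : marking) (l : action)
  (m2 : marking) : Prop :=
  exists s rest o, Permutation m1 (s :: rest) /\ T s l o /\ Permutation m2 (olist o ++ rest).

Definition glob_trans (s : proc) (mu : action) (o : option proc) : Prop :=
  exists s', step s mu s' /\ olist o = dec s'.

Definition reach_mark (m0 m : marking) : Prop :=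
  clos_refl_trans marking (fun a b => exists l, fire glob_trans a l b) m0 m.

Definition net_place (p : proc) (s : proc) : Prop :=
  exists m, reach_mark (dec p) m /\ In s m.

Definition net (p : proc) : FSM :=
  {| places := net_place p;
     trans := fun s mu o => net_place p s /\ glob_trans s mu o |}.

(* [[p \ H]] : place s\H identified with s (renaming is injective);
   transitions with high labels removed *)
Definition net_hide (p : proc) : FSM :=
  {| places := places (net p);
     trans := fun s mu o => trans (net p) s mu o /\ ~ is_high mu |}.

Definition net_union (N1 N2 : FSM) : FSM :=
  {| places := fun s => places N1 s \/ places N2 s;
     trans := fun s l o => trans N1 s l o \/ trans N2 s l o |}.

Inductive eps (N : FSM) : proc -> option proc -> Prop :=
| eps_refl s : eps N s (Some s)
| eps_step s s' m : eps N s (Some s') -> trans N s' Tau m -> eps N s m.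

Definition Ropt (R : proc -> proc -> Prop) (o1 o2 : option proc) : Prop :=
  match o1, o2 with Some a, Some b => R a b | _, _ => False end.

Definition bb_half (N : FSM) (R : proc -> proc -> Prop) : Prop :=
  forall s1 s2, R s1 s2 -> forall l m1, trans N s1 l m1 ->
    (l = Tau /\ exists m2, eps N s2 m2 /\ Ropt R (Some s1) m2 /\ Ropt R m1 m2)
    \/ (exists s m2, eps N s2 (Some s) /\ trans N s l m2 /\ R s1 s /\
          ((m1 = None /\ m2 = None) \/ Ropt R m1 m2)).

Definition branching_bisim (N : FSM) (R : proc -> proc -> Prop) : Prop :=
  (forall s1 s2, R s1 s2 -> places N s1 /\ places N s2) /\
  bb_half N R /\ bb_half N (fun a b => R b a).

Definition bbisimilar (N : FSM) (s1 s2 : proc) : Prop :=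
  exists R, branching_bisim N R /\ R s1 s2.

Inductive add_clos (R : proc -> proc -> Prop) : marking -> marking -> Prop :=
| ac_nil : add_clos R [] []
| ac_cons s1 s2 m1 m2 : R s1 s2 -> add_clos R m1 m2 -> add_clos R (s1 :: m1) (s2 :: m2)
| ac_perm m1 m2 m1' m2' : add_clos R m1 m2 -> Permutation m1 m1' -> Permutation m2 m2' ->
    add_clos R m1' m2'.

(* p' \ H  ~~(+)  p'' \ H , computed in the union of [[p'\H]] and [[p''\H]] *)
Definition hide_team_equiv (p' p'' : proc) : Prop :=
  add_clos (bbisimilar (net_union (net_hide p') (net_hide p''))) (dec p') (dec p'').

Definition DNI (p : proc) : Prop :=
  forall p' p'' h, reachable p p' -> reachable p p'' -> step p' (Hi h) p'' ->
    hide_team_equiv p' p''.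

End CFM.

(* Main.v *)
Require Import Defs.
From Stdlib Require Import List FinFun Permutation Relations Classical.
Import ListNotations.

Section Proofs.
Variables (H L K : Type) (def : K -> proc H L K).
Local Notation P := (proc H L K).

Lemma eps_trans (N : FSM H L K) a b m : eps N a (Some b) -> eps N b m -> eps N a m.
Proof. intros Hab Hbm. induction Hbm; auto. eapply eps_step; [apply IHHbm; exact Hab|eauto]. Qed.

Lemma eps_mono (N1 N2 : FSM H L K) : (forall s l o, trans N1 s l o -> trans N2 s l o) ->
  forall a m, eps N1 a m -> eps N2 a m.
Proof. intros Ht a m He. induction He. constructor. eapply eps_step; eauto. Qed.

Lemma bb_half_iff (N : FSM H L K) (R R' : P -> P -> Prop) :
  (forall a b, R a b <-> R' a b) -> bb_half N R -> bb_half N R'.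
Proof.
 intros E Hh s1 s2 HR l m1 Ht. apply E in HR.
 destruct (Hh _ _ HR _ _ Ht) as [[Hl [m2 [He [H1 H2]]]] | [s [m2 [He [Ht2 [Hr Hm]]]]]].
 - left. split; auto. exists m2. destruct m2; simpl in *; [|contradiction].
   destruct m1; simpl in *; [|contradiction]. repeat split; auto; apply E; auto.
 - right. exists s, m2. repeat split; auto. apply E; auto.
   destruct Hm as [Hm|Hm]; [left; auto| right].
   destruct m1, m2; simpl in *; try contradiction. apply E; auto.
Qed.

Lemma eps_sim (N : FSM H L K) S a b x : bb_half N S -> S a b -> eps N a (Some x) ->
  exists y, eps N b (Some y) /\ S x y.
Proof.
 intros HS Hab He. remember (Some x) as m eqn:Em. revert x Em. induction He; intros x Em.
 - inversion Em; subst. exists b; split; [constructor|auto].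
 - subst m. destruct (IHHe Hab s' eq_refl) as [y [Hey Hy]].
   destruct (HS _ _ Hy _ _ H0) as [[_ [m2 [He2 [H1 H2]]]] | [t [m2 [He2 [Ht2 [Hr Hm]]]]]].
   + destruct m2 as [z|]; simpl in *; [|contradiction]. exists z. split; auto. eapply eps_trans; eauto.
   + destruct Hm as [[Hc _]|Hm]; [discriminate|]. destruct m2 as [z|]; simpl in Hm; [|contradiction].
     exists z; split; auto. eapply eps_trans; [exact Hey|]. eapply eps_step; [exact He2|exact Ht2].
Qed.

Definition comp (R S : P -> P -> Prop) a c := exists b, R a b /\ S b c.

Lemma bb_half_comp (N : FSM H L K) R S : bb_half N R -> bb_half N S -> bb_half N (comp R S).
Proof.
 intros HR HS s1 s3 [s2 [R12 S23]] l m1 Ht.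
 destruct (HR _ _ R12 _ _ Ht) as [[Hl [m2 [He [H1 H2]]]] | [s [m2 [He [Ht2 [Hr Hm]]]]]].
 - destruct m2 as [x|]; simpl in H1; [|contradiction].
   destruct m1 as [y|]; simpl in H2; [|contradiction].
   destruct (eps_sim _ _ _ _ _ HS S23 He) as [z [Hez Hxz]].
   left. split; auto. exists (Some z). simpl. split; auto. split; exists x; auto.
 - destruct (eps_sim _ _ _ _ _ HS S23 He) as [t [Het Hst]].
   destruct (HS _ _ Hst _ _ Ht2) as [[Hl [m3 [He3 [H1 H2]]]] | [t' [m3 [He3 [Ht3 [Hr3 Hm3]]]]]].
   + destruct m3 as [z|]; simpl in H1; [|contradiction].
     destruct m2 as [w|]; simpl in H2; [|contradiction].
     destruct Hm as [[_ Hc]|Hm]; [discriminate|].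
     destruct m1 as [y|]; simpl in Hm; [|contradiction].
     left. split; auto. exists (Some z). simpl. split; [eapply eps_trans; eauto|].
     split; [exists s; auto| exists w; auto].
   + right. exists t', m3. split; [eapply eps_trans; eauto|]. split; auto. split; [exists s; auto|].
     destruct Hm as [[E1 E2]|Hm]; destruct Hm3 as [[E3 E4]|Hm3]; subst.
     * left; auto.
     * simpl in Hm3; contradiction.
     * destruct m1; simpl in Hm; contradiction.
     * right. destruct m1, m2, m3; simpl in *; try contradiction. exists p0; auto.
Qed.

Lemma bbis_sym (N : FSM H L K) a b : bbisimilar N a b -> bbisimilar N b a.
Proof.
 intros [R [[Hp [H1 H2]] Hab]]. exists (fun x y => R y x). split; auto.
 split; [intros; destruct (Hp _ _ H0); auto|]. split; auto.
Qed.

Lemma bbis_trans (N : FSM H L K) a b c : bbisimilar N a b -> bbisimilar N b c -> bbisimilar N a c.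
Proof.
 intros [R [[Hp [H1 H2]] Hab]] [S [[Hq [H3 H4]] Hbc]].
 exists (comp R S). split; [|exists b; auto].
 split; [intros x y [z [Hxz Hzy]]; split; [apply (Hp _ _ Hxz)|apply (Hq _ _ Hzy)]|].
 split; [apply bb_half_comp; auto|].
 apply (bb_half_iff _ (comp (fun x y => S y x) (fun x y => R y x))).
 - intros x y; split; intros [z [? ?]]; exists z; auto.
 - apply bb_half_comp; auto.
Qed.

Lemma bbis_refl (N : FSM H L K) a :
  (forall s l x, trans N s l (Some x) -> places N x) -> places N a -> bbisimilar N a a.
Proof.
 intros Hcl Ha. exists (fun x y => x = y /\ places N x). split; auto.
 assert (Hh : bb_half N (fun x y => x = y /\ places N x)).
 { intros s1 s2 [E Hs] l m1 Ht. subst. right. exists s2, m1. split; [constructor|].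
   split; auto. split; auto. destruct m1 as [x|]; [right; simpl; split; eauto| left; auto]. }
 split; [intros x y [E Hx]; subst; auto|]. split; auto.
 eapply bb_half_iff; [|exact Hh]. intros x y; split; intros [E Hx]; subst; auto.
Qed.


Lemma ac_F2 (R : P -> P -> Prop) m1 m2 : add_clos R m1 m2 ->
  exists m2', Forall2 R m1 m2' /\ Permutation m2' m2.
Proof.
 induction 1.
 - exists []; split; auto.
 - destruct IHadd_clos as [m [F Pm]]. exists (s2 :: m); split; auto.
 - destruct IHadd_clos as [m [F Pm]].
   destruct (Permutation_Forall2 H1 F) as [l2 [Pl F2]]. exists l2. split; auto.
   eapply Permutation_trans; [apply Permutation_sym; exact Pl|]. eapply Permutation_trans; [exact Pm|exact H2].
Qed.

Lemma F2_ac (R : P -> P -> Prop) m1 m2' m2 : Forall2 R m1 m2' -> Permutation m2' m2 -> add_clos R m1 m2.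
Proof.
 intros F Pm. apply ac_perm with m1 m2'; auto.
 clear Pm. induction F; constructor; auto.
Qed.

Lemma ac_cancel1 (E : P -> P -> Prop) x L1 L2 :
  (forall a b c, E a b -> E b c -> E a c) ->
  add_clos E (x :: L1) (x :: L2) -> add_clos E L1 L2.
Proof.
 intros Etr Hac. destruct (ac_F2 _ _ _ Hac) as [L2' [F Pm]].
 assert (Hin : In x L2') by (apply Permutation_in with (x :: L2); [apply Permutation_sym; auto| left; auto]).
 destruct (in_split _ _ Hin) as [Pp [Q EQ]]. subst L2'.
 destruct Pp as [|y P'].
 - simpl in *. inversion F; subst. apply F2_ac with Q; auto.
   apply (Permutation_cons_inv Pm).
 - simpl in *. inversion F; subst.
   destruct (Forall2_app_inv_r _ _ H5) as [l1 [l2 [F1 [F2 El]]]]. subst.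
   inversion F2; subst.
   apply F2_ac with (P' ++ y :: Q).
   + apply Forall2_app; auto. constructor; eauto.
   + eapply Permutation_trans; [apply Permutation_sym; apply Permutation_middle|].
     apply (Permutation_app_inv (y :: P') Q [] L2 x). simpl. exact Pm.
Qed.

Lemma ac_cancel (E : P -> P -> Prop) M A B :
  (forall a b c, E a b -> E b c -> E a c) ->
  add_clos E (M ++ A) (M ++ B) -> add_clos E A B.
Proof.
 intros Etr. induction M; simpl; auto. intros Hac. apply IHM. eapply ac_cancel1; eauto.
Qed.

Lemma ac_app (R : P -> P -> Prop) A B C D : add_clos R A B -> add_clos R C D ->
  add_clos R (A ++ C) (B ++ D).
Proof.
 intros H1 H2. destruct (ac_F2 _ _ _ H1) as [B' [F1 P1]]. destruct (ac_F2 _ _ _ H2) as [D' [F2 P2]].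
 apply F2_ac with (B' ++ D'). apply Forall2_app; auto. apply Permutation_app; auto.
Qed.

Lemma ac_refl (R : P -> P -> Prop) M : (forall x, In x M -> R x x) -> add_clos R M M.
Proof. induction M; intros Hr; constructor; simpl in *; auto. Qed.

Lemma F2_mono_in (R S : P -> P -> Prop) l1 l2 : Forall2 R l1 l2 ->
  (forall x y, In x l1 -> In y l2 -> R x y -> S x y) -> Forall2 S l1 l2.
Proof. induction 1; intros Hs; constructor; simpl in *; auto. Qed.

Lemma ac_mono_in (R S : P -> P -> Prop) m1 m2 : add_clos R m1 m2 ->
  (forall x y, In x m1 -> In y m2 -> R x y -> S x y) -> add_clos S m1 m2.
Proof.
 intros Hac Hs. destruct (ac_F2 _ _ _ Hac) as [m2' [F Pm]]. apply F2_ac with m2'; auto.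
 apply F2_mono_in with R; auto. intros x y Hx Hy. apply Hs; auto.
 apply Permutation_in with m2'; auto.
Qed.

Lemma eps_restr (N1 N2 : FSM H L K) :
  (forall s l o, places N1 s -> trans N2 s l o -> trans N1 s l o) ->
  (forall s l x, trans N1 s l (Some x) -> places N1 x) ->
  forall a m, eps N2 a m -> places N1 a -> eps N1 a m /\ (forall x, m = Some x -> places N1 x).
Proof.
 intros Hr Hc a m He Ha. induction He.
 - split; [constructor| intros x E; inversion E; subst; auto].
 - destruct (IHHe Ha) as [E1 P1]. specialize (P1 s' eq_refl).
   assert (T1 : trans N1 s' (Tau H L) m) by auto.
   split; [eapply eps_step; eauto|]. intros x E; subst. eauto.
Qed.

Lemma half_restr (N1 N2 : FSM H L K) (R : P -> P -> Prop) :
  (forall s l o, trans N1 s l o -> trans N2 s l o) ->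
  (forall s l o, places N1 s -> trans N2 s l o -> trans N1 s l o) ->
  (forall s l x, trans N1 s l (Some x) -> places N1 x) ->
  bb_half N2 R -> bb_half N1 (fun x y => R x y /\ places N1 x /\ places N1 y).
Proof.
 intros Hm Hr Hc Hh s1 s2 [HR [P1 P2]] l m1 Ht.
 destruct (Hh _ _ HR _ _ (Hm _ _ _ Ht)) as [[Hl [m2 [He [H1 H2]]]] | [s [m2 [He [Ht2 [Hrr Hmm]]]]]].
 - destruct (eps_restr _ _ Hr Hc _ _ He P2) as [E1 PP].
   left. split; auto. exists m2. split; auto.
   destruct m2 as [z|]; simpl in *; [|contradiction]. destruct m1 as [y|]; simpl in *; [|contradiction].
   assert (Pz := PP z eq_refl). repeat split; eauto.
 - destruct (eps_restr _ _ Hr Hc _ _ He P2) as [E1 PP]. assert (Ps := PP s eq_refl).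
   assert (T1 : trans N1 s l m2) by auto.
   right. exists s, m2. repeat split; auto.
   destruct Hmm as [Hmm|Hmm]; [left; auto|right].
   destruct m1 as [y|], m2 as [z|]; simpl in *; try contradiction. repeat split; eauto.
Qed.

Lemma bisim_restr (N1 N2 : FSM H L K) (R : P -> P -> Prop) :
  (forall s l o, trans N1 s l o -> trans N2 s l o) ->
  (forall s l o, places N1 s -> trans N2 s l o -> trans N1 s l o) ->
  (forall s l x, trans N1 s l (Some x) -> places N1 x) ->
  branching_bisim N2 R -> branching_bisim N1 (fun x y => R x y /\ places N1 x /\ places N1 y).
Proof.
 intros Hm Hr Hc [Hp [H1 H2]]. split; [intros x y [_ [? ?]]; auto|]. split.
 - apply half_restr with N2; auto.
 - eapply bb_half_iff; [|apply (half_restr N1 N2 (fun x y => R y x)); eauto].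
   intros x y; simpl; tauto.
Qed.

Lemma half_mono (N1 N2 : FSM H L K) (R : P -> P -> Prop) :
  (forall s l o, trans N1 s l o -> trans N2 s l o) ->
  (forall s l o, places N1 s -> trans N2 s l o -> trans N1 s l o) ->
  (forall a b, R a b -> places N1 a) -> bb_half N1 R -> bb_half N2 R.
Proof.
 intros Hm Hr Hpl Hh s1 s2 HR l m1 Ht.
 destruct (Hh _ _ HR _ _ (Hr _ _ _ (Hpl _ _ HR) Ht)) as [[Hl [m2 [He [H1 H2]]]] | [s [m2 [He [Ht2 [Hrr Hmm]]]]]].
 - left. split; auto. exists m2. split; auto. eapply eps_mono; eauto.
 - right. exists s, m2. repeat split; auto. eapply eps_mono; eauto.
Qed.

Lemma bisim_mono (N1 N2 : FSM H L K) (R : P -> P -> Prop) :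
  (forall s, places N1 s -> places N2 s) ->
  (forall s l o, trans N1 s l o -> trans N2 s l o) ->
  (forall s l o, places N1 s -> trans N2 s l o -> trans N1 s l o) ->
  branching_bisim N1 R -> branching_bisim N2 R.
Proof.
 intros Hpp Hm Hr [Hp [H1 H2]]. split; [intros x y Hxy; destruct (Hp _ _ Hxy); auto|]. split.
 - apply half_mono with N1; auto. intros a b Hab; apply (Hp _ _ Hab).
 - apply half_mono with N1; auto. intros a b Hab; apply (Hp _ _ Hab).
Qed.


Local Notation U a b := (net_union (net_hide def a) (net_hide def b)).

Lemma trans_U a b s l o : trans (U a b) s l o <->
  (net_place def a s \/ net_place def b s) /\ glob_trans def s l o /\ ~ is_high l.
Proof. simpl. tauto. Qed.

Lemma fire_perm_l T (m1 : marking H L K) l m2 m1' : fire T m1 l m2 -> Permutation m1 m1' -> fire T m1' l m2.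
Proof.
 intros [s [rest [o [P1 [Ht P2]]]]] Pm. exists s, rest, o. split; auto.
 eapply Permutation_trans; [apply Permutation_sym; exact Pm| exact P1].
Qed.

Lemma fire_app T (m1 : marking H L K) l m2 M : fire T m1 l m2 -> fire T (m1 ++ M) l (m2 ++ M).
Proof.
 intros [s [rest [o [P1 [Ht P2]]]]]. exists s, (rest ++ M), o. split; [|split; auto].
 - apply (Permutation_app_tail M P1).
 - rewrite app_assoc. apply Permutation_app_tail; auto.
Qed.

Lemma reach_app m0 m M : reach_mark def m0 m -> reach_mark def (m0 ++ M) (m ++ M).
Proof.
 induction 1.
 - apply rt_step. destruct H0 as [l Hf]. exists l. apply fire_app; auto.
 - apply rt_refl.
 - eapply rt_trans; eauto.
Qed.

Lemma reach_perm m0 m m0' : reach_mark def m0 m -> Permutation m0 m0' ->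
  exists m', reach_mark def m0' m' /\ Permutation m m'.
Proof.
 intros Hr Pm. apply clos_rt_rt1n_iff in Hr. destruct Hr as [|y z Hxy Hyz].
 - exists m0'; split; auto. apply rt_refl.
 - exists z. split; auto. eapply rt_trans; [apply rt_step|apply clos_rt_rt1n_iff; exact Hyz].
   destruct Hxy as [l Hf]. exists l. eapply fire_perm_l; eauto.
Qed.

Lemma net_place_sub q a M s : Permutation (dec q) (dec a ++ M) -> net_place def a s -> net_place def q s.
Proof.
 intros Pq [m [Hr Hin]]. apply (reach_app _ _ M) in Hr.
 destruct (reach_perm _ _ (dec q) Hr (Permutation_sym Pq)) as [m' [Hr' Pm]].
 exists m'. split; auto. apply Permutation_in with (m ++ M); auto. apply in_or_app; auto.
Qed.

Lemma net_place_step a s l x : net_place def a s -> glob_trans def s l (Some x) -> net_place def a x.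
Proof.
 intros [m [Hr Hin]] Hg. destruct (in_split _ _ Hin) as [m1 [m2 E]]. subst.
 exists (x :: m1 ++ m2). split; [|left; auto].
 eapply rt_trans; [exact Hr|]. apply rt_step. exists l, s, (m1 ++ m2), (Some x).
 split; [apply Permutation_sym, Permutation_middle|]. split; auto.
Qed.

Lemma net_place_init a s : In s (dec a) -> net_place def a s.
Proof. intros Hin. exists (dec a). split; auto. apply rt_refl. Qed.

Lemma closure_U a b s l x : trans (U a b) s l (Some x) -> places (U a b) x.
Proof.
 intros Ht. apply trans_U in Ht. destruct Ht as [[Hp|Hp] [Hg _]]; simpl;
  [left|right]; eapply net_place_step; eauto.
Qed.

Section Lift.
Variables (p1 p2 q1 q2 : P) (M : marking H L K).
Hypotheses (P1 : Permutation (dec p1) (dec q1 ++ M)) (P2 : Permutation (dec p2) (dec q2 ++ M)).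

Lemma lift_places s : places (U q1 q2) s -> places (U p1 p2) s.
Proof. simpl. intros [Hs|Hs]; [left|right]; eapply net_place_sub; eauto. Qed.

Lemma lift_trans s l o : trans (U q1 q2) s l o -> trans (U p1 p2) s l o.
Proof.
 intros Ht. apply trans_U in Ht. apply trans_U. destruct Ht as [Hp Hr]. split; auto.
 apply (lift_places s Hp).
Qed.

Lemma restr_trans s l o : places (U q1 q2) s -> trans (U p1 p2) s l o -> trans (U q1 q2) s l o.
Proof.
 intros Hp Ht. apply trans_U in Ht. apply trans_U. destruct Ht as [_ Hr]. split; auto.
Qed.
End Lift.

Inductive ev : P -> P -> Prop :=
| ev_nil : ev (Nil H L K) (Nil H L K)
| ev_par a b a' b' : ev a a' -> ev b b' -> ev (Par a b) (Par a' b')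
| ev_leaf s q : dec s = [s] -> reachable def s q -> ev s q.

Lemma ev_refl p : ev p p.
Proof.
 induction p; try (apply ev_leaf; [reflexivity| apply rt_refl]).
 apply ev_nil. apply ev_par; auto.
Qed.

Lemma ev_step p q mu q' : ev p q -> step def q mu q' -> ev p q'.
Proof.
 intros He. revert mu q'. induction He; intros mu q' Hs.
 - inversion Hs.
 - inversion Hs; subst; apply ev_par; eauto.
 - apply ev_leaf; auto. eapply rt_trans; [exact H1|]. apply rt_step. exists mu; auto.
Qed.

Lemma reach_ev p q : reachable def p q -> ev p q.
Proof.
 intros Hr. apply clos_rt_rtn1_iff in Hr. induction Hr.
 - apply ev_refl.
 - destruct H0 as [mu Hs]. eapply ev_step; eauto.
Qed.

Lemma ev_hstep p q mu q' : ev p q -> step def q mu q' ->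
  exists pi pi' pi'' M, In pi (dec p) /\ reachable def pi pi' /\ step def pi' mu pi'' /\
    Permutation (dec q) (dec pi' ++ M) /\ Permutation (dec q') (dec pi'' ++ M).
Proof.
 intros He. revert mu q'. induction He; intros mu q' Hs.
 - inversion Hs.
 - inversion Hs; subst.
   + destruct (IHHe1 _ _ H4) as [pi [pi' [pi'' [M [Hin [Hr [Hs' [Q1 Q2]]]]]]]].
     exists pi, pi', pi'', (M ++ dec b'). simpl. split; [apply in_or_app; auto|].
     split; auto. split; auto. rewrite !app_assoc. split; apply Permutation_app_tail; auto.
   + destruct (IHHe2 _ _ H4) as [pi [pi' [pi'' [M [Hin [Hr [Hs' [Q1 Q2]]]]]]]].
     exists pi, pi', pi'', (dec a' ++ M). simpl. split; [apply in_or_app; auto|].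
     split; auto. split; auto. split.
     * eapply Permutation_trans; [apply Permutation_app_head; exact Q1|].
       rewrite !app_assoc. apply Permutation_app_tail. apply Permutation_app_comm.
     * eapply Permutation_trans; [apply Permutation_app_head; exact Q2|].
       rewrite !app_assoc. apply Permutation_app_tail. apply Permutation_app_comm.
 - exists s, q, q', []. rewrite H0. split; [left; auto|]. split; auto. split; auto.
   rewrite !app_nil_r. split; auto.
Qed.

Lemma plug_ex p pi : In pi (dec p) -> exists (f : P -> P) M, f pi = p /\
  (forall q mu q', step def q mu q' -> step def (f q) mu (f q')) /\
  (forall q, Permutation (dec (f q)) (dec q ++ M)).
Proof.
 induction p; simpl; intros Hin;
  try (destruct Hin as [E|[]]; subst; exists (fun q => q), []; split; auto; split; auto;
       intros; rewrite app_nil_r; auto).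
 - destruct Hin.
 - apply in_app_or in Hin. destruct Hin as [Hin|Hin].
   + destruct (IHp1 Hin) as [f [M [Ef [Hf Hd]]]].
     exists (fun q => Par (f q) p2), (M ++ dec p2). split; [subst; auto|]. split.
     * intros; apply st_parl; auto.
     * intros q. simpl. rewrite app_assoc. apply Permutation_app_tail; auto.
   + destruct (IHp2 Hin) as [f [M [Ef [Hf Hd]]]].
     exists (fun q => Par p1 (f q)), (dec p1 ++ M). split; [subst; auto|]. split.
     * intros; apply st_parr; auto.
     * intros q. simpl. eapply Permutation_trans; [apply Permutation_app_head; apply Hd|].
       rewrite !app_assoc. apply Permutation_app_tail. apply Permutation_app_comm.
Qed.

Lemma reach_lift (f : P -> P) a b : (forall q mu q', step def q mu q' -> step def (f q) mu (f q')) ->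
  reachable def a b -> reachable def (f a) (f b).
Proof.
 intros Hf. induction 1.
 - apply rt_step. destruct H0 as [mu Hs]. exists mu; auto.
 - apply rt_refl.
 - eapply rt_trans; eauto.
Qed.

Lemma DNI_comp p : (forall pi, In pi (dec p) -> DNI def pi) -> DNI def p.
Proof.
 intros Hall p' p'' h R1 R2 Hs.
 destruct (ev_hstep _ _ _ _ (reach_ev _ _ R1) Hs) as [pi [pi' [pi'' [M [Hin [Rp [Hs' [Q1 Q2]]]]]]]].
 assert (Rp2 : reachable def pi pi'').
 { eapply rt_trans; [exact Rp| apply rt_step; eexists; exact Hs']. }
 pose proof (Hall pi Hin pi' pi'' h Rp Rp2 Hs') as Hd. unfold hide_team_equiv in *.
 apply ac_perm with (dec pi' ++ M) (dec pi'' ++ M); try (apply Permutation_sym; auto).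
 apply ac_app.
 - apply ac_mono_in with (bbisimilar (U pi' pi'')); auto.
   intros x y _ _ [R [HB HR]]. exists R; split; auto.
   apply bisim_mono with (U pi' pi''); auto.
   + intros s; apply (lift_places p' p'' pi' pi'' M Q1 Q2).
   + intros s l o; apply (lift_trans p' p'' pi' pi'' M Q1 Q2).
   + intros s l o; apply (restr_trans p' p'' pi' pi'').
 - apply ac_refl. intros x Hx. apply bbis_refl.
   + intros s l y; apply closure_U.
   + simpl. left. apply net_place_init. apply Permutation_in with (dec pi' ++ M).
     apply Permutation_sym; auto. apply in_or_app; auto.
Qed.

Lemma DNI_part p pi : DNI def p -> In pi (dec p) -> DNI def pi.
Proof.
 intros HD Hin pi' pi'' h R1 R2 Hs. destruct (plug_ex _ _ Hin) as [f [M [Ef [Hf Hd]]]].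
 assert (R1' : reachable def p (f pi')) by (rewrite <- Ef; apply reach_lift; auto).
 assert (R2' : reachable def p (f pi'')) by (rewrite <- Ef; apply reach_lift; auto).
 pose proof (HD _ _ h R1' R2' (Hf _ _ _ Hs)) as Hac. unfold hide_team_equiv in *.
 assert (Hac2 : add_clos (bbisimilar (U (f pi') (f pi''))) (M ++ dec pi') (M ++ dec pi'')).
 { apply ac_perm with (dec (f pi')) (dec (f pi'')); auto;
   (eapply Permutation_trans; [apply Hd| apply Permutation_app_comm]). }
 apply ac_cancel in Hac2; [|intros a b c; apply bbis_trans].
 apply ac_mono_in with (bbisimilar (U (f pi') (f pi''))); auto.
 intros x y Hx Hy [R [HB HR]].
 exists (fun x y => R x y /\ places (U pi' pi'') x /\ places (U pi' pi'') y).
 split.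
 - apply bisim_restr with (U (f pi') (f pi'')); auto.
   + intros s l o; apply (lift_trans (f pi') (f pi'') pi' pi'' M (Hd _) (Hd _)).
   + intros s l o; apply (restr_trans (f pi') (f pi'') pi' pi'').
   + intros s l z; apply closure_U.
 - split; auto. simpl. split; [left|right]; apply net_place_init; auto.
Qed.

End Proofs.

Theorem theorem4p1 (H L K : Type) (finH : Finite H) (finL : Finite L) (finK : Finite K)
  (def : K -> proc H L K) (p : proc H L K) :
  CFM_process def p ->
  (~ DNI def p <-> exists pi, In pi (dec p) /\ ~ DNI def pi).
Proof.
 intros _. split.
 - intros HnD. apply NNPP. intros Hno. apply HnD. apply DNI_comp. intros pi Hin.
   apply NNPP. intros Hn. apply Hno. exists pi; auto.
 - intros [pi [Hin Hn]] HD. apply Hn. eapply DNI_part; eauto.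
Qed.
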